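(* In a generalised differential Seely category, the family $\mathscr D^X_A:W(X,A)\to\,!^SW(X,A)$, for $X\in\mathscr C$, $A\in\mathcal L$, is a natural transformation $W\Rightarrow\,!^S W$: for every morphism $(f,u):(X,A)\to(Y,B)$ of $LS(\mathscr C)$, $\mathscr D^X_A;!^S(W(f,u))=W(f,u);\mathscr D^Y_B$.
   Context: Composition is diagrammatic; monoidal categories are strict. Setting: an LNL adjunction $\mathcal F\dashv\mathcal U$, $\mathcal F:\mathscr C\to\mathcal L$, between cartesian $(\mathscr C,\times,I)$ and symmetric monoidal $(\mathcal L,\otimes,1)$; $\mathcal U$ lax monoidal via $n_{A,B}:\mathcal U(A)\times\mathcal U(B)\to\mathcal U(A\otimes B)$; $\mathcal F$ strong monoidal via isomorphisms $m_{X,Y}:\mathcal F(X)\otimes\mathcal F(Y)\to\mathcal F(X\times Y)$, $m_1$; unit $\eta$; comonad $!=\mathcal F\mathcal U$; $\mathbf c_X:=\mathcal F(\Delta_X);m_{X,X}^{-1}$, $\mathbf w_X:=\mathcal F(t_X);m_1^{-1}$. $LS(\mathscr C)$: objects $(X,A)$; morphisms $(f,u):(X,A)\to(Y,B)$ with $f:X\to Y$, $u:\mathcal F(X)\otimes A\to B$; composition $(f,u);(g,v)=(f;g,(\mathbf c_X\otimes\mathrm{id}_A);(\mathcal F(f)\otimes u);v)$; identity $(\mathrm{id}_X,\mathbf w_X\otimes\mathrm{id}_A)$; $\mathbf{ls}(f,u)=f$; vertical morphisms over $X$ are $(\mathrm{id}_X,u)$. With biproducts $\oplus$ in $\mathcal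 L$: fibrewise injections $\iota^X_i=(\mathrm{id}_X,\mathbf w_X\otimes\iota_i)$; products in $LS(\mathscr C)$: $(X\times Y,A\oplus B)$, projections $(\pi_i,\mathbf w_{X\times Y}\otimes\pi_i)$. The functor $!^S:LS(\mathscr C)\to LS(\mathscr C)$: $!^S(X,A)=(X,!A)$, $!^S(f,u)=(f,(\mathcal F(\eta_X)\otimes\mathrm{id}_{!A});m_{\mathcal U\mathcal F(X),\mathcal U(A)};\mathcal F(n_{\mathcal F(X),A});!u)$. GDSC: $\mathcal L$ additive (CMon-enriched, $\otimes$ bilinear) with finite products, and a functor $\mathcal T:\mathscr C\to LS(\mathscr C)$ with: (t.1) $\mathbf{ls}\circ\mathcal T=\mathrm{id}$, so $\mathcal T(X)=(X,\lambda(X))$, and $\varphi_{X,Y}:=\langle\mathcal T(\pi_1),\mathcal T(\pi_2)\rangle:\mathcal T(X\times Y)\to(X\times Y,\lambda(X)\oplus\lambda(Y))$ is an isomorphism; (t.2) $\mathcal T(\mathcal U(A))=(\mathcal U(A),A)$; (t.3) with $i^{X,Y}_2:=\iota^{X\times Y}_2;\varphi^{-1}_{X,Y}$, comprehension $⦃(f,u)⦄:=\langle\pi_1;f,(\eta_X\times\mathrm{id}_{\mathcal U(A)});n_{\mathcal F(X),A};\mathcal U(u)\rangle:X\times\mathcal U(A)\to Y\times\mathcal U(B)$, weakening functor $W(X,A):=(X\times\mathcal U(A),A)$, $W(f,u):=(⦃(f,u)⦄,(\mathcal F(\pi_1)\otimes\mathrm{id}_A);u)$: $W(f,u);i^{Y,\mathcal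 U(B)}_2=i^{X,\mathcal U(A)}_2;\mathcal T(⦃(f,u)⦄)$. Differential: for $h:X\to Y$ with $\mathcal T(h)=(h,v)$, $\mathrm D(h):=(\mathrm{id}_X,v)$; for $h:X\times Y\to Z$, $\mathrm D_2(h):=i^{X,Y}_2;\mathrm D(h)$. Define $\mathscr D^X_A:=\mathrm D_2(\pi_2;\eta_{\mathcal U(A)}):(X\times\mathcal U(A),A)\to(X\times\mathcal U(A),!A)$, where $\pi_2;\eta_{\mathcal U(A)}:X\times\mathcal U(A)\to\mathcal U(!A)$. *)

(* Defs.v *)
(* Composition is diagrammatic:
   [f ;; g] means "first f, then g". Equality of morphisms is Leibniz. *)
From Stdlib Require Import Utf8.

Set Implicit Arguments.
Unset Strict Implicit.

Record Category := {
  ob :> Type;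
  hom : ob -> ob -> Type;
  comp : forall {A B C}, hom A B -> hom B C -> hom A C;
  idm : forall A, hom A A;
  comp_id_l : forall A B (f : hom A B), comp (idm A) f = f;
  comp_id_r : forall A B (f : hom A B), comp f (idm B) = f;
  comp_assoc : forall A B C D (f : hom A B) (g : hom B C) (h : hom C D),
      comp (comp f g) h = comp f (comp g h) }.

Arguments hom {c} _ _.
Arguments comp {c A B C} _ _.
Arguments idm {c} A.

Notation "f ;; g" := (comp f g) (at level 50, left associativity).

(** The canonical morphism induced by an equality of objects (identity
    transported along the equality).  Used to express strictness. *)
Definition eq_hom {C : Category} {A B : C} (e : A = B) : hom A B :=
  match e in _ = B' return hom A B' with eq_refl => idm A end.

Record Functor (C D : Category) := {
  fob :> C -> D;
  fmap : forall {A B : C}, hom A B -> hom (fob A) (fob B);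
  fmap_id : forall A, fmap (idm A) = idm (fob A);
  fmap_comp : forall A B E (f : hom A B) (g : hom B E),
      fmap (f ;; g) = fmap f ;; fmap g }.

Arguments fmap {C D} _ {A B} _.

Record CartCat := {
  cc :> Category;
  cprod : cc -> cc -> cc;
  p1 : forall X Y, hom (cprod X Y) X;
  p2 : forall X Y, hom (cprod X Y) Y;
  pair : forall {Z X Y}, hom Z X -> hom Z Y -> hom Z (cprod X Y);
  pair_p1 : forall Z X Y (f : hom Z X) (g : hom Z Y), pair f g ;; p1 X Y = f;
  pair_p2 : forall Z X Y (f : hom Z X) (g : hom Z Y), pair f g ;; p2 X Y = g;
  pair_uniq : forall Z X Y (h : hom Z (cprod X Y)),
      h = pair (h ;; p1 X Y) (h ;; p2 X Y);
  cterm : cc;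
  bang : forall X, hom X cterm;
  bang_uniq : forall X (h : hom X cterm), h = bang X }.

Arguments cprod {c} _ _.
Arguments p1 {c} X Y.
Arguments p2 {c} X Y.
Arguments pair {c Z X Y} _ _.
Arguments cterm {c}.
Arguments bang {c} X.

Section CartDefs.
Context {C : CartCat}.
Definition prodm {X Y X' Y' : C} (f : hom X X') (g : hom Y Y') :
  hom (cprod X Y) (cprod X' Y') := pair (p1 X Y ;; f) (p2 X Y ;; g).
Definition diag (X : C) : hom X (cprod X X) := pair (idm X) (idm X).
Definition cassoc (X Y Z : C) : hom (cprod (cprod X Y) Z) (cprod X (cprod Y Z)) :=
  pair (p1 _ _ ;; p1 X Y) (pair (p1 _ _ ;; p2 X Y) (p2 _ Z)).
Definition cswap (X Y : C) : hom (cprod X Y) (cprod Y X) := pair (p2 X Y) (p1 X Y).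
End CartDefs.

Record SSMC := {
  sc :> Category;
  tens : sc -> sc -> sc;
  tensm : forall {A B A' B'}, hom A A' -> hom B B' -> hom (tens A B) (tens A' B');
  tensm_id : forall A B, tensm (idm A) (idm B) = idm (tens A B);
  tensm_comp : forall A B A' B' A'' B'' (f : hom A A') (f' : hom A' A'')
      (g : hom B B') (g' : hom B' B''),
      tensm (f ;; f') (g ;; g') = tensm f g ;; tensm f' g';
  munit : sc;
  assoc_ob : forall A B C, tens (tens A B) C = tens A (tens B C);
  lunit_ob : forall A, tens munit A = A;
  runit_ob : forall A, tens A munit = A;
  assoc_nat : forall A B C A' B' C' (f : hom A A') (g : hom B B') (h : hom C C'),
      tensm (tensm f g) h ;; eq_hom (assoc_ob A' B' C')
      = eq_hom (assoc_ob A B C) ;; tensm f (tensm g h);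
  lunit_nat : forall A B (f : hom A B),
      tensm (idm munit) f ;; eq_hom (lunit_ob B) = eq_hom (lunit_ob A) ;; f;
  runit_nat : forall A B (f : hom A B),
      tensm f (idm munit) ;; eq_hom (runit_ob B) = eq_hom (runit_ob A) ;; f;
  sym : forall A B, hom (tens A B) (tens B A);
  sym_nat : forall A B A' B' (f : hom A A') (g : hom B B'),
      tensm f g ;; sym A' B' = sym A B ;; tensm g f;
  sym_inv : forall A B, sym A B ;; sym B A = idm (tens A B);
  sym_hexagon : forall A B C,
      sym A (tens B C)
      = eq_hom (eq_sym (assoc_ob A B C)) ;; tensm (sym A B) (idm C)
        ;; eq_hom (assoc_ob B A C) ;; tensm (idm B) (sym A C)
        ;; eq_hom (eq_sym (assoc_ob B C A)) }.

Arguments tens {s} _ _.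
Arguments tensm {s A B A' B'} _ _.
Arguments munit {s}.
Arguments assoc_ob {s} A B C.
Arguments lunit_ob {s} A.
Arguments runit_ob {s} A.
Arguments sym {s} A B.

Notation "A ⊗ B" := (tens A B) (at level 40, left associativity).
Notation "f ⊗ₘ g" := (tensm f g) (at level 40, left associativity).

Record AddBiprod (L : SSMC) := {
  zero : forall A B : L, hom A B;
  plus : forall {A B : L}, hom A B -> hom A B -> hom A B;
  plus_assoc : forall A B (f g h : hom A B), plus (plus f g) h = plus f (plus g h);
  plus_comm : forall A B (f g : hom A B), plus f g = plus g f;
  plus_zero_l : forall A B (f : hom A B), plus (zero A B) f = f;
  comp_plus_l : forall A B C (f g : hom A B) (h : hom B C),
      plus f g ;; h = plus (f ;; h) (g ;; h);
  comp_plus_r : forall A B C (f : hom A B) (g h : hom B C),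
      f ;; plus g h = plus (f ;; g) (f ;; h);
  comp_zero_l : forall A B C (h : hom B C), zero A B ;; h = zero A C;
  comp_zero_r : forall A B C (f : hom A B), f ;; zero B C = zero A C;
  tens_plus_l : forall A B A' B' (f g : hom A A') (h : hom B B'),
      plus f g ⊗ₘ h = plus (f ⊗ₘ h) (g ⊗ₘ h);
  tens_plus_r : forall A B A' B' (f : hom A A') (g h : hom B B'),
      f ⊗ₘ plus g h = plus (f ⊗ₘ g) (f ⊗ₘ h);
  tens_zero_l : forall A B A' B' (h : hom B B'), zero A A' ⊗ₘ h = zero _ _;
  tens_zero_r : forall A B A' B' (f : hom A A'), f ⊗ₘ zero B B' = zero _ _;
  bp : L -> L -> L;
  bpi1 : forall A B, hom (bp A B) A;
  bpi2 : forall A B, hom (bp A B) B;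
  bpair : forall {C A B}, hom C A -> hom C B -> hom C (bp A B);
  bpair_pi1 : forall C A B (f : hom C A) (g : hom C B), bpair f g ;; bpi1 A B = f;
  bpair_pi2 : forall C A B (f : hom C A) (g : hom C B), bpair f g ;; bpi2 A B = g;
  bpair_uniq : forall C A B (h : hom C (bp A B)),
      h = bpair (h ;; bpi1 A B) (h ;; bpi2 A B);
  binj1 : forall A B, hom A (bp A B);
  binj2 : forall A B, hom B (bp A B);
  binj1_pi1 : forall A B, binj1 A B ;; bpi1 A B = idm A;
  binj1_pi2 : forall A B, binj1 A B ;; bpi2 A B = zero A B;
  binj2_pi1 : forall A B, binj2 A B ;; bpi1 A B = zero B A;
  binj2_pi2 : forall A B, binj2 A B ;; bpi2 A B = idm B;
  bp_sum : forall A B,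
      plus (bpi1 A B ;; binj1 A B) (bpi2 A B ;; binj2 A B) = idm (bp A B);
  lterm : L;
  lbang : forall A, hom A lterm;
  lbang_uniq : forall A (h : hom A lterm), h = lbang A }.

Arguments bp {L} _ _ _.
Arguments bpi1 {L} _ A B.
Arguments bpi2 {L} _ A B.
Arguments bpair {L} _ {C A B} _ _.
Arguments binj1 {L} _ A B.
Arguments binj2 {L} _ A B.

Record LNL := {
  LC : CartCat;
  LL : SSMC;
  F : Functor LC LL;
  U : Functor LL LC;
  eta : forall X : LC, hom X (U (F X));
  eps : forall A : LL, hom (F (U A)) A;
  eta_nat : forall X Y (f : hom X Y), f ;; eta Y = eta X ;; fmap U (fmap F f);
  eps_nat : forall A B (g : hom A B), fmap F (fmap U g) ;; eps B = eps A ;; g;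
  triangle_F : forall X, fmap F (eta X) ;; eps (F X) = idm (F X);
  triangle_U : forall A, eta (U A) ;; fmap U (eps A) = idm (U A);
  m : forall X Y : LC, hom (F X ⊗ F Y) (F (cprod X Y));
  m_inv : forall X Y : LC, hom (F (cprod X Y)) (F X ⊗ F Y);
  m_iso1 : forall X Y, m X Y ;; m_inv X Y = idm _;
  m_iso2 : forall X Y, m_inv X Y ;; m X Y = idm _;
  m1 : hom munit (F cterm);
  m1_inv : hom (F cterm) munit;
  m1_iso1 : m1 ;; m1_inv = idm _;
  m1_iso2 : m1_inv ;; m1 = idm _;
  m_nat : forall X Y X' Y' (f : hom X X') (g : hom Y Y'),
      fmap F f ⊗ₘ fmap F g ;; m X' Y' = m X Y ;; fmap F (prodm f g);
  m_assoc : forall X Y Z,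
      m X Y ⊗ₘ idm (F Z) ;; m (cprod X Y) Z ;; fmap F (cassoc X Y Z)
      = eq_hom (assoc_ob (F X) (F Y) (F Z)) ;; idm (F X) ⊗ₘ m Y Z ;; m X (cprod Y Z);
  m_lunit : forall X,
      m1 ⊗ₘ idm (F X) ;; m cterm X ;; fmap F (p2 cterm X) = eq_hom (lunit_ob (F X));
  m_runit : forall X,
      idm (F X) ⊗ₘ m1 ;; m X cterm ;; fmap F (p1 X cterm) = eq_hom (runit_ob (F X));
  m_sym : forall X Y, sym (F X) (F Y) ;; m Y X = m X Y ;; fmap F (cswap X Y);
  n : forall A B : LL, hom (cprod (U A) (U B)) (U (A ⊗ B));
  n1 : hom cterm (U munit);
  n_nat : forall A B A' B' (f : hom A A') (g : hom B B'),
      prodm (fmap U f) (fmap U g) ;; n A' B' = n A B ;; fmap U (f ⊗ₘ g);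
  n_assoc : forall A B C,
      prodm (n A B) (idm (U C)) ;; n (A ⊗ B) C ;; fmap U (eq_hom (assoc_ob A B C))
      = cassoc (U A) (U B) (U C) ;; prodm (idm (U A)) (n B C) ;; n A (B ⊗ C);
  n_lunit : forall A,
      prodm n1 (idm (U A)) ;; n munit A ;; fmap U (eq_hom (lunit_ob A)) = p2 cterm (U A);
  n_runit : forall A,
      prodm (idm (U A)) n1 ;; n A munit ;; fmap U (eq_hom (runit_ob A)) = p1 (U A) cterm;
  n_sym : forall A B, cswap (U A) (U B) ;; n B A = n A B ;; fmap U (sym A B);
  eta_mon : forall X Y,
      eta (cprod X Y) = prodm (eta X) (eta Y) ;; n (F X) (F Y) ;; fmap U (m X Y);
  eta_mon1 : eta cterm = n1 ;; fmap U m1;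
  eps_mon : forall A B,
      m (U A) (U B) ;; fmap F (n A B) ;; eps (A ⊗ B) = eps A ⊗ₘ eps B;
  eps_mon1 : m1 ;; fmap F n1 ;; eps munit = idm munit }.

Arguments eta {l} X.
Arguments eps {l} A.
Arguments m {l} X Y.
Arguments m_inv {l} X Y.
Arguments m1 {l}.
Arguments m1_inv {l}.
Arguments n {l} A B.
Arguments n1 {l}.

(** * The category LS(C) of linear (simple) slices, given by its
      hom-sets and composition.  An object is a pair (X, A), a morphism
      (X,A) → (Y,B) a pair (f, u) with f : X → Y, u : F X ⊗ A → B. *)

Section LS.
Context (S : LNL).
Notation C := (LC S).
Notation L := (LL S).
Notation F := (F S).
Notation U := (U S).

Definition LSHom (X : C) (A : L) (Y : C) (B : L) : Type :=
  (hom X Y * hom (F X ⊗ A) B)%type.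

Definition cX (X : C) : hom (F X) (F X ⊗ F X) := fmap F (diag X) ;; m_inv X X.
Definition wX (X : C) : hom (F X) munit := fmap F (bang X) ;; m1_inv.

Definition lscomp {X Y Z : C} {A B D : L}
  (fu : LSHom X A Y B) (gv : LSHom Y B Z D) : LSHom X A Z D :=
  (fst fu ;; fst gv,
   cX X ⊗ₘ idm A ;; eq_hom (assoc_ob (F X) (F X) A)
     ;; fmap F (fst fu) ⊗ₘ snd fu ;; snd gv).

Definition lsid (X : C) (A : L) : LSHom X A X A :=
  (idm X, wX X ⊗ₘ idm A ;; eq_hom (lunit_ob A)).

Definition lscast (X : C) {A A' : L} (e : A = A') : LSHom X A X A' :=
  (idm X, wX X ⊗ₘ eq_hom e ;; eq_hom (lunit_ob A')).

Definition bangS {X Y : C} {A B : L} (fu : LSHom X A Y B) :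
  LSHom X (F (U A)) Y (F (U B)) :=
  (fst fu,
   fmap F (eta X) ⊗ₘ idm (F (U A)) ;; m (U (F X)) (U A)
     ;; fmap F (n (F X) A) ;; fmap F (fmap U (snd fu))).

Definition compr {X Y : C} {A B : L} (fu : LSHom X A Y B) :
  hom (cprod X (U A)) (cprod Y (U B)) :=
  pair (p1 X (U A) ;; fst fu)
       (prodm (eta X) (idm (U A)) ;; n (F X) A ;; fmap U (snd fu)).

Definition Wm {X Y : C} {A B : L} (fu : LSHom X A Y B) :
  LSHom (cprod X (U A)) A (cprod Y (U B)) B :=
  (compr fu, fmap F (p1 X (U A)) ⊗ₘ idm A ;; snd fu).

Context (Ad : AddBiprod L).

Definition fib_inj2 (X : C) (A B : L) : LSHom X B X (bp Ad A B) :=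
  (idm X, wX X ⊗ₘ binj2 Ad A B ;; eq_hom (lunit_ob (bp Ad A B))).

Definition lspair {Z X Y : C} {D A B : L}
  (fu : LSHom Z D X A) (gv : LSHom Z D Y B) : LSHom Z D (cprod X Y) (bp Ad A B) :=
  (pair (fst fu) (fst gv), bpair Ad (snd fu) (snd gv)).

End LS.

Arguments lscomp {S X Y Z A B D} _ _.
Arguments LSHom : clear implicits.

Record GDSC := {
  G_lnl :> LNL;
  G_add : AddBiprod (LL G_lnl);
  (* (t.1): T X = (X, λ X) and T(h) = (h, Tm h) *)
  lam : LC G_lnl -> LL G_lnl;
  Tm : forall {X Y : LC G_lnl}, hom X Y -> hom (F G_lnl X ⊗ lam X) (lam Y);
  T_id : forall X, (idm X, Tm (idm X)) = lsid X (lam X);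
  T_comp : forall X Y Z (h : hom X Y) (k : hom Y Z),
      (h ;; k, Tm (h ;; k)) = lscomp (h, Tm h) (k, Tm k);
  (* φ_{X,Y} = ⟨T(π1), T(π2)⟩ is an isomorphism, with inverse phi_inv *)
  phi_inv : forall X Y : LC G_lnl,
      LSHom G_lnl (cprod X Y) (bp G_add (lam X) (lam Y)) (cprod X Y) (lam (cprod X Y));
  phi_inv1 : forall X Y,
      lscomp (lspair G_add (p1 X Y, Tm (p1 X Y)) (p2 X Y, Tm (p2 X Y))) (phi_inv X Y)
      = lsid (cprod X Y) (lam (cprod X Y));
  phi_inv2 : forall X Y,
      lscomp (phi_inv X Y) (lspair G_add (p1 X Y, Tm (p1 X Y)) (p2 X Y, Tm (p2 X Y)))
      = lsid (cprod X Y) (bp G_add (lam X) (lam Y));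
  t2 : forall A : LL G_lnl, lam (U G_lnl A) = A;
  (* (t.3), with i_2^{X,UA} : (X × UA, A) → T(X × UA) *)
  t3 : forall (X Y : LC G_lnl) (A B : LL G_lnl) (fu : LSHom G_lnl X A Y B),
      lscomp (Wm fu)
        (lscomp (lscast (cprod Y (U G_lnl B)) (eq_sym (t2 B)))
          (lscomp (fib_inj2 G_add (cprod Y (U G_lnl B)) (lam Y) (lam (U G_lnl B)))
                  (phi_inv Y (U G_lnl B))))
      = lscomp
          (lscomp (lscast (cprod X (U G_lnl A)) (eq_sym (t2 A)))
            (lscomp (fib_inj2 G_add (cprod X (U G_lnl A)) (lam X) (lam (U G_lnl A)))
                    (phi_inv X (U G_lnl A))))
          (compr fu, Tm (compr fu)) }.

Arguments Tm {g X Y} _.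
Arguments phi_inv {g} X Y.

Section Differential.
Context (S : GDSC).
Notation C := (LC S).
Notation L := (LL S).

Definition i2 (X Y : C) : LSHom S (cprod X Y) (lam Y) (cprod X Y) (lam (cprod X Y)) :=
  lscomp (fib_inj2 (G_add S) (cprod X Y) (lam X) (lam Y)) (phi_inv X Y).

Definition Dm {X Y : C} (h : hom X Y) : LSHom S X (lam X) X (lam Y) :=
  (idm X, Tm h).

Definition D2 {X Y Z : C} (h : hom (cprod X Y) Z) :
  LSHom S (cprod X Y) (lam Y) (cprod X Y) (lam Z) :=
  lscomp (i2 X Y) (Dm h).

(** 𝒟^X_A := D_2(π_2 ; η_{U A}) : (X × UA, A) → (X × UA, !A).
    The (identity) casts along (t.2) λ(U A) = A and λ(U !A) = !A make the
    typing literal. *)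
Definition scrD (X : C) (A : L) :
  LSHom S (cprod X (U S A)) A (cprod X (U S A)) (F S (U S A)) :=
  lscomp (lscast _ (eq_sym (t2 A)))
    (lscomp (D2 (p2 X (U S A) ;; eta (U S A)))
            (lscast _ (t2 (F S (U S A))))).

End Differential.

(* Main.v *)
Require Import Defs.
From Stdlib Require Import ProofIrrelevance.
From Corelib Require Import ssreflect.

Section Gen.
Context {C : Category}.
Lemma cA {A B D E : C} (f : hom A B) (g : hom B D) (h : hom D E) : f ;; g ;; h = f ;; (g ;; h).
Proof. apply comp_assoc. Qed.
Lemma c1l {A B : C} (f : hom A B) : idm A ;; f = f. Proof. apply comp_id_l. Qed.
Lemma c1r {A B : C} (f : hom A B) : f ;; idm B = f. Proof. apply comp_id_r. Qed.
Lemma eqh_trans {A B D : C} (e : A = B) (e' : B = D) :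
  eq_hom e ;; eq_hom e' = eq_hom (eq_trans e e').
Proof. destruct e'. simpl. apply c1r. Qed.
Lemma eqh_trans' {A B D E : C} (e : A = B) (e' : B = D) (r : hom D E) :
  eq_hom e ;; (eq_hom e' ;; r) = eq_hom (eq_trans e e') ;; r.
Proof. by rewrite -cA eqh_trans. Qed.
Lemma eqh_pi (A B : C) (e e' : A = B) : eq_hom e = eq_hom e'.
Proof. by rewrite (proof_irrelevance _ e e'). Qed.
Lemma eqh_self (A : C) (e : A = A) : eq_hom e = idm A.
Proof. by rewrite (proof_irrelevance _ e eq_refl). Qed.
End Gen.

Section Mon.
Context {L : SSMC}.
Lemma eqh_tl (A A' B : L) (e : A = A') :
  eq_hom e ⊗ₘ idm B = eq_hom (f_equal (fun x => x ⊗ B) e).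
Proof. destruct e. simpl. apply tensm_id. Qed.
Lemma eqh_tr (A B B' : L) (e : B = B') :
  idm A ⊗ₘ eq_hom e = eq_hom (f_equal (fun x => A ⊗ x) e).
Proof. destruct e. simpl. apply tensm_id. Qed.
Lemma tc {A B A' B' A'' B'' : L} (f : hom A A') (f' : hom A' A'') (g : hom B B') (g' : hom B' B'') :
  f ⊗ₘ g ;; f' ⊗ₘ g' = (f ;; f') ⊗ₘ (g ;; g').
Proof. by rewrite tensm_comp. Qed.
Lemma tc' {A B A' B' A'' B'' E : L} (f : hom A A') (f' : hom A' A'') (g : hom B B') (g' : hom B' B'') (r : hom _ E) :
  f ⊗ₘ g ;; (f' ⊗ₘ g' ;; r) = (f ;; f') ⊗ₘ (g ;; g') ;; r.
Proof. by rewrite -cA tc. Qed.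
Lemma t1 (A B : L) : idm A ⊗ₘ idm B = idm (A ⊗ B). Proof. apply tensm_id. Qed.
Lemma tl_split {A B D : L} (f : hom A B) (g : hom B D) (E : L) :
  (f ;; g) ⊗ₘ idm E = f ⊗ₘ idm E ;; g ⊗ₘ idm E.
Proof. by rewrite tc c1l. Qed.
Lemma tr_split {A B D : L} (f : hom A B) (g : hom B D) (E : L) :
  idm E ⊗ₘ (f ;; g) = idm E ⊗ₘ f ;; idm E ⊗ₘ g.
Proof. by rewrite tc c1l. Qed.
Lemma tl_cancel {A B : L} (f : hom A B) (g : hom B A) (E D : L) (r : hom _ D) :
  f ;; g = idm A -> f ⊗ₘ idm E ;; (g ⊗ₘ idm E ;; r) = r.
Proof. move=> H. by rewrite -cA tc H c1l t1 c1l. Qed.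
End Mon.

Section Cart.
Context {C : CartCat}.
Lemma pair_ext (Z X Y : C) (f g : hom Z (cprod X Y)) :
  f ;; p1 X Y = g ;; p1 X Y -> f ;; p2 X Y = g ;; p2 X Y -> f = g.
Proof. move=> H1 H2. by rewrite (pair_uniq f) (pair_uniq g) H1 H2. Qed.
Lemma pair_comp (W Z X Y : C) (h : hom W Z) (f : hom Z X) (g : hom Z Y) :
  h ;; pair f g = pair (h ;; f) (h ;; g).
Proof. apply pair_ext; by rewrite ?cA ?pair_p1 ?pair_p2. Qed.
Lemma pair_id (X Y : C) : pair (p1 X Y) (p2 X Y) = idm _.
Proof. apply pair_ext; by rewrite ?pair_p1 ?pair_p2 c1l. Qed.
Lemma pair_prodm (Z X Y X' Y' : C) (f : hom Z X) (g : hom Z Y) (f' : hom X X') (g' : hom Y Y') :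
  pair f g ;; prodm f' g' = pair (f ;; f') (g ;; g').
Proof. rewrite /prodm pair_comp -!cA pair_p1 pair_p2 //. Qed.
Lemma prodm_p1 (X Y X' Y' : C) (f' : hom X X') (g' : hom Y Y') :
  prodm f' g' ;; p1 _ _ = p1 _ _ ;; f'.
Proof. by rewrite /prodm pair_p1. Qed.
Lemma prodm_p2 (X Y X' Y' : C) (f' : hom X X') (g' : hom Y Y') :
  prodm f' g' ;; p2 _ _ = p2 _ _ ;; g'.
Proof. by rewrite /prodm pair_p2. Qed.
Lemma prodm_comp (X Y X' Y' X'' Y'' : C) (f : hom X X') (g : hom Y Y') (f' : hom X' X'') (g' : hom Y' Y'') :
  prodm f g ;; prodm f' g' = prodm (f ;; f') (g ;; g').
Proof. by rewrite {1}/prodm pair_prodm !cA. Qed.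
Lemma prodm_id (X Y : C) : prodm (idm X) (idm Y) = idm _.
Proof. by rewrite /prodm !c1r pair_id. Qed.
Lemma diag_p1 (X : C) : diag X ;; p1 X X = idm X. Proof. apply pair_p1. Qed.
Lemma diag_p2 (X : C) : diag X ;; p2 X X = idm X. Proof. apply pair_p2. Qed.
End Cart.

Section LNLlem.
Context (S : LNL).
Lemma fcomp (X Y Z : LC S) (f : hom X Y) (g : hom Y Z) :
  fmap (F S) f ;; fmap (F S) g = fmap (F S) (f ;; g).
Proof. by rewrite fmap_comp. Qed.
Lemma fcomp' (X Y Z : LC S) E (f : hom X Y) (g : hom Y Z) (r : hom _ E) :
  fmap (F S) f ;; (fmap (F S) g ;; r) = fmap (F S) (f ;; g) ;; r.
Proof. by rewrite -cA fcomp. Qed.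
Lemma ucomp (X Y Z : LL S) (f : hom X Y) (g : hom Y Z) :
  fmap (U S) f ;; fmap (U S) g = fmap (U S) (f ;; g).
Proof. by rewrite fmap_comp. Qed.

Lemma m_iso1' (X Y : LC S) E (r : hom _ E) : m X Y ;; (m_inv X Y ;; r) = r.
Proof. by rewrite -cA m_iso1 c1l. Qed.
Lemma m_iso2' (X Y : LC S) E (r : hom _ E) : m_inv X Y ;; (m X Y ;; r) = r.
Proof. by rewrite -cA m_iso2 c1l. Qed.
Lemma MI (X Y X' Y' : LC S) (f : hom X X') (g : hom Y Y') :
  m_inv X Y ;; (fmap (F S) f ⊗ₘ fmap (F S) g) = fmap (F S) (prodm f g) ;; m_inv X' Y'.
Proof.
  rewrite -[LHS]c1r -(m_iso1 X' Y') -cA (cA (m_inv X Y)) m_nat -cA m_iso2 c1l //.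
Qed.
Lemma wnat (X Y : LC S) (f : hom X Y) : fmap (F S) f ;; wX Y = wX X.
Proof. by rewrite /wX -cA fcomp (bang_uniq (f ;; bang Y)). Qed.
Lemma cnat (X Y : LC S) (f : hom X Y) :
  fmap (F S) f ;; cX Y = cX X ;; (fmap (F S) f ⊗ₘ fmap (F S) f).
Proof.
  rewrite /cX cA MI -cA -cA fcomp fcomp. f_equal. f_equal.
  apply pair_ext; rewrite !cA ?prodm_p1 ?prodm_p2 ?diag_p1 ?diag_p2 -!cA ?diag_p1 ?diag_p2 c1l c1r //.
Qed.
Lemma Fid (X : LC S) : fmap (F S) (idm X) = idm _. Proof. apply fmap_id. Qed.
Lemma Uid (X : LL S) : fmap (U S) (idm X) = idm _. Proof. apply fmap_id. Qed.

Lemma lu_m (X : LC S) :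
  m_inv cterm X ;; ((m1_inv ⊗ₘ idm _) ;; eq_hom (lunit_ob (F S X))) = fmap (F S) (p2 cterm X).
Proof.
  rewrite -cA -m_lunit. rewrite -!cA (cA (m_inv cterm X)) tc m1_iso2 c1l t1 c1r m_iso2 c1l //.
Qed.
Lemma ru_m (X : LC S) :
  m_inv X cterm ;; ((idm _ ⊗ₘ m1_inv) ;; eq_hom (runit_ob (F S X))) = fmap (F S) (p1 X cterm).
Proof.
  rewrite -cA -m_runit. rewrite -!cA (cA (m_inv X cterm)) tc m1_iso2 c1l t1 c1r m_iso2 c1l //.
Qed.

Lemma MI_l (X Y X' : LC S) (f : hom X X') :
  m_inv X Y ;; (fmap (F S) f ⊗ₘ idm _) = fmap (F S) (prodm f (idm Y)) ;; m_inv X' Y.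
Proof. by rewrite -MI Fid. Qed.
Lemma MI_r (X Y Y' : LC S) (f : hom Y Y') :
  m_inv X Y ;; (idm _ ⊗ₘ fmap (F S) f) = fmap (F S) (prodm (idm X) f) ;; m_inv X Y'.
Proof. by rewrite -MI Fid. Qed.
Lemma counit_l (X : LC S) : cX X ;; (wX X ⊗ₘ idm _) ;; eq_hom (lunit_ob _) = idm _.
Proof.
  rewrite /cX /wX tl_split !cA -(cA (m_inv X X)).
  rewrite MI_l !cA lu_m fcomp' fcomp -Fid. f_equal.
  by rewrite cA prodm_p2 -cA diag_p2 c1l.
Qed.
Lemma counit_r (X : LC S) : cX X ;; (idm _ ⊗ₘ wX X) ;; eq_hom (runit_ob _) = idm _.
Proof.
  rewrite /cX /wX tr_split !cA -(cA (m_inv X X)).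
  rewrite MI_r !cA ru_m fcomp' fcomp -Fid. f_equal.
  by rewrite cA prodm_p1 -cA diag_p1 c1l.
Qed.
Lemma EA (X Y Z : LC S) :
  eq_hom (assoc_ob (F S X) (F S Y) (F S Z)) =
  m X Y ⊗ₘ idm _ ;; m _ Z ;; fmap (F S) (cassoc X Y Z) ;; m_inv _ _ ;; idm _ ⊗ₘ m_inv Y Z.
Proof.
  rewrite m_assoc !cA m_iso1' tc m_iso1 c1l t1 c1r //.
Qed.
Lemma cassoc_diag (X : LC S) :
  diag X ;; prodm (diag X) (idm X) ;; cassoc X X X = diag X ;; prodm (idm X) (diag X).
Proof.
  rewrite /cassoc {1 3}/diag !pair_prodm !c1l pair_comp pair_comp -!cA !pair_p1 !pair_p2 //.
Qed.
Lemma coassoc (X : LC S) :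
  cX X ;; (cX X ⊗ₘ idm _) ;; eq_hom (assoc_ob _ _ _) = cX X ;; (idm _ ⊗ₘ cX X).
Proof.
  rewrite EA /cX tl_split tr_split !cA.
  rewrite -(cA (m_inv X X) (fmap (F S) (diag X) ⊗ₘ _)) MI_l cA.
  rewrite -(cA (m_inv X X) (_ ⊗ₘ fmap (F S) (diag X))) MI_r cA.
  rewrite tl_cancel; first by apply m_iso2.
  by rewrite m_iso2' !fcomp' cassoc_diag.
Qed.
End LNLlem.

Section Mon2.
Context {L : SSMC}.
Lemma an' {A B D A' B' D' E : L} (f : hom A A') (g : hom B B') (h : hom D D') (r : hom _ E) :
  eq_hom (assoc_ob A B D) ;; (f ⊗ₘ (g ⊗ₘ h) ;; r) = (f ⊗ₘ g) ⊗ₘ h ;; (eq_hom (assoc_ob A' B' D') ;; r).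
Proof. by rewrite -cA -assoc_nat cA. Qed.
Lemma ln' {A B E : L} (f : hom A B) (r : hom _ E) :
  idm munit ⊗ₘ f ;; (eq_hom (lunit_ob B) ;; r) = eq_hom (lunit_ob A) ;; (f ;; r).
Proof. by rewrite -cA lunit_nat cA. Qed.
Lemma ln {A B : L} (f : hom A B) :
  idm munit ⊗ₘ f ;; eq_hom (lunit_ob B) = eq_hom (lunit_ob A) ;; f.
Proof. by rewrite lunit_nat. Qed.
Lemma tsplit_l {A B A' B' : L} (f : hom A A') (g : hom B B') :
  f ⊗ₘ g = f ⊗ₘ idm B ;; idm A' ⊗ₘ g.
Proof. by rewrite tc c1l c1r. Qed.
End Mon2.

Section LSlaws.
Context {S : LNL}.

Lemma N1 (P : LC S) (A : LL S) :
  cX P ⊗ₘ idm A ;; (eq_hom (assoc_ob _ _ A) ;; (wX P ⊗ₘ idm _ ;; eq_hom (lunit_ob _))) = idm _.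
Proof.
  rewrite -t1 an' -cA tc c1l.
  have -> : eq_hom (assoc_ob munit (F S P) A) ;; eq_hom (lunit_ob (F S P ⊗ A)) = eq_hom (lunit_ob (F S P)) ⊗ₘ idm A.
    by rewrite eqh_tl eqh_trans; apply eqh_pi.
  by rewrite tc counit_l c1l t1.
Qed.
Lemma N2 (P : LC S) (A : LL S) :
  cX P ⊗ₘ idm A ;; (eq_hom (assoc_ob _ _ A) ;; (idm _ ⊗ₘ (wX P ⊗ₘ idm _ ;; eq_hom (lunit_ob _)))) = idm _.
Proof.
  rewrite tr_split an' -cA tc c1l.
  have -> : eq_hom (assoc_ob (F S P) munit A) ;; idm (F S P) ⊗ₘ eq_hom (lunit_ob A) = eq_hom (runit_ob (F S P)) ⊗ₘ idm A.
    by rewrite eqh_tl eqh_tr eqh_trans; apply eqh_pi.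
  by rewrite tc counit_r c1l t1.
Qed.
Lemma N1L (P : LC S) (A : LL S) :
  cX P ⊗ₘ idm A ;; eq_hom (assoc_ob _ _ A) ;; wX P ⊗ₘ idm _ ;; eq_hom (lunit_ob _) = idm _.
Proof. by rewrite !cA N1. Qed.
Lemma N2L (P : LC S) (A : LL S) :
  cX P ⊗ₘ idm A ;; eq_hom (assoc_ob _ _ A) ;; idm _ ⊗ₘ (wX P ⊗ₘ idm _ ;; eq_hom (lunit_ob _)) = idm _.
Proof. by rewrite !cA N2. Qed.
Lemma G3 {P Q R : LC S} {A B B' : LL S} (a : LSHom S P A Q B) (x : hom Q R) (g : hom B B') :
  lscomp a (x, wX Q ⊗ₘ g ;; eq_hom (lunit_ob B')) = (fst a ;; x, snd a ;; g).
Proof.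
  destruct a as [f u]. rewrite /lscomp /=. f_equal.
  rewrite !cA tc' wnat (tsplit_l (wX P)) cA ln -!cA N1L c1l //.
Qed.
Lemma lsid_r {P Q : LC S} {A B : LL S} (a : LSHom S P A Q B) : lscomp a (lsid Q B) = a.
Proof. rewrite /lsid G3 c1r c1r. by destruct a. Qed.
Lemma lsid_l {P Q : LC S} {A B : LL S} (a : LSHom S P A Q B) : lscomp (lsid P A) a = a.
Proof.
  destruct a as [f u]. rewrite /lscomp /lsid /=. f_equal; first by apply c1l.
  by rewrite Fid N2L c1l.
Qed.

Lemma Qc (P : LC S) (A : LL S) :
  cX P ⊗ₘ idm A ;; (eq_hom (assoc_ob _ _ A) ;; (cX P ⊗ₘ idm _ ;; eq_hom (assoc_ob _ _ _)))
  = cX P ⊗ₘ idm A ;; (eq_hom (assoc_ob _ _ A) ;; idm _ ⊗ₘ (cX P ⊗ₘ idm A ;; eq_hom (assoc_ob _ _ _))).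
Proof.
  have E : (cX P ;; idm _ ⊗ₘ cX P) ⊗ₘ idm A = (cX P ;; cX P ⊗ₘ idm _) ⊗ₘ idm A ;; eq_hom (assoc_ob (F S P) (F S P) (F S P)) ⊗ₘ idm A.
    by rewrite -tl_split coassoc.
  rewrite -t1 an' tr_split -(c1r (idm (F S P) ⊗ₘ eq_hom _)) an' c1r -!cA tc tc !c1l E.
  rewrite !cA. f_equal.
  by rewrite ?eqh_tl ?eqh_tr !eqh_trans; apply eqh_pi.
Qed.
Lemma lscomp_assoc {P Q R T : LC S} {A B D E : LL S}
  (a : LSHom S P A Q B) (b : LSHom S Q B R D) (c : LSHom S R D T E) :
  lscomp (lscomp a b) c = lscomp a (lscomp b c).
Proof.
  destruct a as [f u], b as [g v], c as [h w]. rewrite /lscomp /=. f_equal; first by apply cA.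
  have R1 : fmap (F S) f ⊗ₘ u ;; cX Q ⊗ₘ idm B = cX P ⊗ₘ idm _ ;; (fmap (F S) f ⊗ₘ fmap (F S) f) ⊗ₘ u.
    by rewrite !tc c1l c1r cnat.
  have L1 : fmap (F S) (f ;; g) ⊗ₘ (cX P ⊗ₘ idm A ;; eq_hom (assoc_ob (F S P) (F S P) A) ;; fmap (F S) f ⊗ₘ u ;; v)
     = idm _ ⊗ₘ (cX P ⊗ₘ idm A ;; eq_hom (assoc_ob (F S P) (F S P) A)) ;; fmap (F S) f ⊗ₘ (fmap (F S) f ⊗ₘ u) ;; fmap (F S) g ⊗ₘ v.
    by rewrite !tc c1l fcomp.
  rewrite L1 !cA -(cA (fmap (F S) f ⊗ₘ u)) R1 !cA -(cA ((_ ⊗ₘ _) ⊗ₘ u)) assoc_nat.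
  rewrite -!cA. f_equal. f_equal. f_equal.
  rewrite !cA. symmetry. apply Qc.
Qed.
End LSlaws.

Section AddL.
Context {L : SSMC} (Ad : AddBiprod L).
Lemma bpair_comp {W C A B : L} (h : hom W C) (f : hom C A) (g : hom C B) :
  h ;; bpair Ad f g = bpair Ad (h ;; f) (h ;; g).
Proof. rewrite (bpair_uniq (h ;; bpair Ad f g)) !cA bpair_pi1 bpair_pi2 //. Qed.
Lemma bpair_zero {C A B : L} (s : hom C B) : bpair Ad (zero Ad C A) s = s ;; binj2 Ad A B.
Proof. rewrite (bpair_uniq (s ;; binj2 Ad A B)) !cA binj2_pi1 binj2_pi2 comp_zero_r c1r //. Qed.
End AddL.

Section GD.
Context (S : GDSC).

Lemma fst_phi_inv (X Y : LC S) : fst (phi_inv X Y) = idm _.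
Proof.
  have := f_equal fst (phi_inv1 X Y). rewrite /lscomp /lspair /= pair_id c1l //.
Qed.
Lemma fst_i2 (X Y : LC S) : fst (i2 X Y) = idm _.
Proof. rewrite /i2 /= fst_phi_inv c1l //. Qed.

Lemma lspair_pre (P Z X Y : LC S) (E D A B : LL S) (a : LSHom S P E Z D)
  (b : LSHom S Z D X A) (c : LSHom S Z D Y B) :
  lscomp a (lspair (G_add S) b c) = lspair (G_add S) (lscomp a b) (lscomp a c).
Proof.
  destruct a, b, c. rewrite /lscomp /lspair /=. f_equal; [apply pair_comp | apply bpair_comp].
Qed.

Lemma Tp2_dec (X Y : LC S) :
  (p2 X Y, Tm (p2 X Y)) = lscomp (lspair (G_add S) (p1 X Y, Tm (p1 X Y)) (p2 X Y, Tm (p2 X Y)))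
     (p2 X Y, wX _ ⊗ₘ bpi2 (G_add S) _ _ ;; eq_hom (lunit_ob _)).
Proof. rewrite G3 /lspair /= pair_p2 bpair_pi2 //. Qed.
Lemma Tp1_dec (X Y : LC S) :
  (p1 X Y, Tm (p1 X Y)) = lscomp (lspair (G_add S) (p1 X Y, Tm (p1 X Y)) (p2 X Y, Tm (p2 X Y)))
     (p1 X Y, wX _ ⊗ₘ bpi1 (G_add S) _ _ ;; eq_hom (lunit_ob _)).
Proof. rewrite G3 /lspair /= pair_p1 bpair_pi1 //. Qed.

Lemma i2_Tp2 (X Y : LC S) :
  lscomp (i2 X Y) (p2 X Y, Tm (p2 X Y)) = (p2 X Y, wX _ ⊗ₘ idm _ ;; eq_hom (lunit_ob _)).
Proof.
  rewrite Tp2_dec /i2 -lscomp_assoc (lscomp_assoc (fib_inj2 _ _ _ _)) phi_inv2 lsid_r G3 /=.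
  rewrite c1l (tsplit_l (wX _)) !cA ln' binj2_pi2 c1r //.
Qed.
Lemma i2_Tp1 (X Y : LC S) :
  lscomp (i2 X Y) (p1 X Y, Tm (p1 X Y)) = (p1 X Y, zero (G_add S) _ _).
Proof.
  rewrite Tp1_dec /i2 -lscomp_assoc (lscomp_assoc (fib_inj2 _ _ _ _)) phi_inv2 lsid_r G3 /=.
  rewrite c1l (tsplit_l (wX _)) !cA ln' binj2_pi1 !comp_zero_r //.
Qed.

Lemma i2_Tpair (X Y Y' : LC S) (h : hom (cprod X Y) Y') :
  lscomp (i2 X Y) (pair (p1 X Y) h, Tm (pair (p1 X Y) h)) =
  lscomp (pair (p1 X Y) h, snd (lscomp (i2 X Y) (h, Tm h))) (i2 X Y').
Proof.
  have E1 : lscomp (pair (p1 X Y) h, Tm (pair (p1 X Y) h))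
              (lspair (G_add S) (p1 X Y', Tm (p1 X Y')) (p2 X Y', Tm (p2 X Y')))
            = lspair (G_add S) (p1 X Y, Tm (p1 X Y)) (h, Tm h).
    by rewrite lspair_pre -!T_comp pair_p1 pair_p2.
  have E2 : lscomp (i2 X Y) (lspair (G_add S) (p1 X Y, Tm (p1 X Y)) (h, Tm h))
            = lscomp (pair (p1 X Y) h, snd (lscomp (i2 X Y) (h, Tm h)))
                (fib_inj2 (G_add S) (cprod X Y') (lam X) (lam Y')).
    rewrite lspair_pre i2_Tp1 /fib_inj2 G3 c1r.
    have -> : lscomp (i2 X Y) (h, Tm h) = (h, snd (lscomp (i2 X Y) (h, Tm h))).
      by rewrite {1}/lscomp {1}fst_i2 c1l.
    by rewrite /lspair /= bpair_zero.
  rewrite -(lsid_r (pair _ h, _)) -(phi_inv1 X Y') -(lscomp_assoc (pair _ h, _)) E1 -lscomp_assoc E2 /i2 lscomp_assoc //.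
Qed.

Lemma lscast_comp (P : LC S) (A B D : LL S) (e : A = B) (e' : B = D) :
  lscomp (lscast P e) (lscast P e') = lscast P (eq_trans e e').
Proof.
  rewrite {2}/lscast G3 /lscast /= c1l !cA -ln -cA tc c1r eqh_trans //.
Qed.
Lemma lscast_self (P : LC S) (A : LL S) (e : A = A) : lscast P e = lsid P A.
Proof. by rewrite /lscast /lsid eqh_self. Qed.

Lemma t3' (X Y : LC S) (A B : LL S) (fu : LSHom S X A Y B) :
  lscomp (i2 X (U S A)) (compr fu, Tm (compr fu)) =
  lscomp (lscast _ (t2 A)) (lscomp (Wm fu) (lscomp (lscast _ (eq_sym (t2 B))) (i2 Y (U S B)))).
Proof.
  rewrite (t3 fu) -!lscomp_assoc lscast_comp lscast_self lsid_l //.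
Qed.
End GD.

Section Main.
Context (S : GDSC).

Lemma C1 (X Y : LC S) (A B : LL S) (fu : LSHom S X A Y B) :
  compr fu ;; (p2 Y (U S B) ;; eta (U S B)) =
  pair (p1 X (U S A)) (p2 X (U S A) ;; eta (U S A)) ;; compr (bangS fu) ;; p2 _ _.
Proof.
  have E : pair (p1 X (U S A) ;; eta X) (p2 X (U S A) ;; eta (U S A)) ;; prodm (fmap (U S) (fmap (F S) (eta X))) (idm _)
             = prodm (eta X) (idm _) ;; prodm (eta (U S (F S X))) (eta (U S A)).
    rewrite prodm_comp pair_prodm /prodm !c1r c1l !cA (eta_nat (eta X)) //.
  rewrite /compr -cA pair_p2 /bangS /=.
  rewrite (cA _ (pair _ _) (p2 _ _)) pair_p2 -!cA pair_prodm c1r -!ucomp -!cA (cA (pair _ _) (n _ _)) -n_nat Uid -cA E.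
  have EM : forall Z (r : hom _ Z), prodm (eta (U S (F S X))) (eta (U S A)) ;; (n _ _ ;; (fmap (U S) (m (U S (F S X)) (U S A)) ;; r))
     = eta (cprod (U S (F S X)) (U S A)) ;; r.
    move=> Z r. by rewrite eta_mon !cA.
  rewrite !cA EM ucomp fcomp -eta_nat !cA //.
Qed.
Lemma C5 (X Y : LC S) (A B : LL S) (fu : LSHom S X A Y B) :
  fmap (F S) (p1 X (U S A)) ⊗ₘ idm _ ;; snd (bangS fu) = snd (bangS (Wm fu)).
Proof.
  rewrite /bangS /Wm /=.
  rewrite -ucomp -fcomp !cA.
  set Z := cprod X (U S A).
  have K : forall E (r : hom _ E), fmap (F S) (n (F S Z) A) ;; (fmap (F S) (fmap (U S) (fmap (F S) (p1 X (U S A)) ⊗ₘ idm A)) ;; r)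
     = fmap (F S) (prodm (fmap (U S) (fmap (F S) (p1 X (U S A)))) (idm _)) ;; (fmap (F S) (n (F S X) A) ;; r).
    move=> E r. by rewrite -!cA fcomp fcomp -(Uid _ A) n_nat.
  have K2 : forall E (r : hom _ E), m (U S (F S Z)) (U S A) ;; (fmap (F S) (prodm (fmap (U S) (fmap (F S) (p1 X (U S A)))) (idm _)) ;; r)
     = fmap (F S) (fmap (U S) (fmap (F S) (p1 X (U S A)))) ⊗ₘ idm _ ;; (m (U S (F S X)) (U S A) ;; r).
    move=> E r. by rewrite -!cA -m_nat Fid.
  have K3 : forall E (r : hom _ E), fmap (F S) (eta Z) ⊗ₘ idm (F S (U S A)) ;; (fmap (F S) (fmap (U S) (fmap (F S) (p1 X (U S A)))) ⊗ₘ idm _ ;; r)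
     = fmap (F S) (p1 X (U S A)) ⊗ₘ idm _ ;; (fmap (F S) (eta X) ⊗ₘ idm _ ;; r).
    move=> E r. by rewrite -!cA !tc !c1l !fcomp -eta_nat.
  by rewrite K K2 K3.
Qed.

Lemma C5' (X Y : LC S) (A B : LL S) (fu : LSHom S X A Y B) :
  bangS (Wm fu) = (compr fu, fmap (F S) (p1 X (U S A)) ⊗ₘ idm _ ;; snd (bangS fu)).
Proof. by rewrite C5. Qed.
Lemma Wm_eta {X Y : LC S} {A B : LL S} (c : LSHom S X A Y B) :
  Wm c = (compr c, fmap (F S) (p1 X (U S A)) ⊗ₘ idm _ ;; snd c).
Proof. by []. Qed.
Lemma G1 {P Q R R' : LC S} {A B D : LL S} (a : LSHom S P A Q B) (x : hom Q R) (c : LSHom S Q B R' D) :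
  lscomp a (x, snd c) = (fst a ;; x, snd (lscomp a c)).
Proof. by destruct a, c. Qed.

Lemma TD {X Y Z : LC S} (k : hom X Y) (h : hom Y Z) :
  lscomp (k, Tm k) (Dm h) = (k ;; idm _, Tm (k ;; h)).
Proof. have -> : Tm (k ;; h) = snd (lscomp (k, Tm k) (h, Tm h)) by rewrite -T_comp. by []. Qed.

Lemma i2D (X Y Z : LC S) (h : hom (cprod X Y) Z) :
  lscomp (i2 X Y) (Dm h) = (idm _, snd (lscomp (i2 X Y) (h, Tm h))).
Proof. by rewrite {1}/lscomp {1}fst_i2 c1l. Qed.

Theorem main (X Y : LC S) (A B : LL S)
  (fu : LSHom S X A Y B) :
  lscomp (scrD X A) (bangS (Wm fu)) = lscomp (Wm fu) (scrD Y B).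
Proof.
  have T3 := t3 fu. fold (i2 Y (U S B)) (i2 X (U S A)) in T3.
  rewrite /scrD /D2 !lscomp_assoc -!(lscomp_assoc (fib_inj2 _ _ _ _)). fold (i2 Y (U S B)) (i2 X (U S A)).
  rewrite -(lscomp_assoc (lscast _ _) (i2 Y _)) -(lscomp_assoc (Wm fu)) T3.
  rewrite !lscomp_assoc. f_equal.
  rewrite -!(lscomp_assoc (fib_inj2 _ _ _ _)). fold (i2 X (U S A)).
  rewrite -(lscomp_assoc (i2 _ _) (Dm _)) i2D -lscomp_assoc.
  set v := snd (lscomp (i2 X (U S A)) _).
  rewrite {1}/lscast G3.
  rewrite -(lscomp_assoc (compr fu, _)) TD C1.
  set b := bangS fu.
  have -> : Tm (pair (p1 X (U S A)) (p2 X (U S A) ;; eta (U S A)) ;; compr b ;; p2 Y (U S (F S (U S B)))) =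
     snd (lscomp (lscomp (pair (p1 X (U S A)) (p2 X (U S A) ;; eta (U S A)), Tm (pair (p1 X (U S A)) (p2 X (U S A) ;; eta (U S A)))) (compr b, Tm (compr b))) (p2 _ _, Tm (p2 _ _))).
    by rewrite -!T_comp.
  rewrite {1}/lscast G3. cbn [fst snd].
  set W' := lscomp (lscomp _ _) (p2 _ _, _).
  have -> : snd W' ;; eq_hom (t2 (F S (U S B))) = snd (lscomp W' (lscast (U S (F S (U S B))) (t2 (F S (U S B))))).
    by rewrite /lscast G3.
  rewrite G1 /W' -!lscomp_assoc i2_Tpair (lscomp_assoc (pair _ _, _) (i2 _ _)) t3' !lscomp_assoc -!(lscomp_assoc (fib_inj2 _ _ _ _)).
  fold (i2 Y (U S (F S (U S B)))) (i2 X (U S A)).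
  rewrite -(lscomp_assoc (i2 _ _)) i2_Tp2. fold v.
  rewrite /lscast -!lscomp_assoc !G3. cbn [fst snd].
  rewrite C5' /b Wm_eta. generalize (snd (bangS fu)) => r.
  rewrite fst_i2. set V := v ;; eq_hom _. clearbody V.
  rewrite !c1l !c1r !cA eqh_trans eqh_self c1r /lscomp. cbn [fst snd]. f_equal.
  - apply c1l.
  - by rewrite !cA !tc' !c1r !fcomp pair_p1 c1l.
Qed.
End Main.

Theorem proposition4p25 (S : GDSC) (X Y : LC S) (A B : LL S)
  (fu : LSHom S X A Y B) :
  lscomp (scrD X A) (bangS (Wm fu)) = lscomp (Wm fu) (scrD Y B).
Proof. exact (main S X Y A B fu). Qed.
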